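(* Let $r\in\mathbb{N}$, $r\ge2$, and let $\underline{m}=(m_0,m_1,m_2,m_3)\in\mathbb{N}^4$ be such that for a single $\ell\in\{0,1,2,3\}$, $\gcd(m_\ell,r)=K$ and $\gcd(m_i,r)=1$ for $i\ne\ell$. Let $t\in\{0,\dots,K-1\}$. Then: (1) for $i<\ell$, there are $\frac{r}{K}$ 1-step admissible paths from $(v_i,0)$ to $(v_\ell,t)$; (2) for $i>\ell$, there are $\frac{r}{K}$ 1-step admissible paths from $(v_\ell,t)$ to $(v_i,0)$.
   Context: $\Lambda=L_7\times_c\mathbb{Z}_r$ is the directed graph with vertices $(v_i,k)$, $0\le i\le 3$, $k\in\mathbb{Z}_r$, and edges $(e_{ij},k)$, $0\le i\le j\le 3$, $k\in\mathbb{Z}_r$, with source $(v_i,k-m_i\bmod r)$ and range $(v_j,k)$; the vertices $(v_i,k)$, $k\in\mathbb{Z}_r$, form level $i$. A path is a finite sequence of edges each starting at the range of the previous. A path of length at least one from $(v_i,s)$ to $(v_j,t)$ is admissible if none of the vertices it passes through other than its source and range lies in $\{(v_p,k): \min(i,j)\le p\le \max(i,j),\ 0\le k\le\gcd(m_p,r)-1\}$. An admissible path is $k$-step if the set of levels containing its vertices (including source and range) has exactly $k+1$ elements; in particular a 1-step path only visits the level of its source and the level of its range. *)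

(* Defs.v *)
From mathcomp Require Import all_boot.
Set Implicit Arguments. Unset Strict Implicit. Unset Printing Implicit Defensive.

(* The graph Lambda = L_7 x_c Z_r, for parameters r and m = (m_0,..,m_3).
   A vertex (v_i, k) is the pair (i, k) with i : 'I_4 and k a natural < r.
   An edge (e_ij, k) is the triple (i, j, k) with i <= j and k < r. *)
Definition vertex := ('I_4 * nat)%type.
Definition edge := ('I_4 * 'I_4 * nat)%type.

Definition valid_edge (r : nat) (e : edge) : bool :=
  (e.1.1 <= e.1.2) && (e.2 < r).

(* source of (e_ij,k) is (v_i, (k - m_i) mod r) *)
Definition esrc (r : nat) (m : 'I_4 -> nat) (e : edge) : vertex :=
  (e.1.1, (e.2 + (r - m e.1.1 %% r)) %% r).

Definition ergn (e : edge) : vertex := (e.1.2, e.2).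

Fixpoint chained (r : nat) (m : 'I_4 -> nat) (e : edge) (p : seq edge) : bool :=
  match p with
  | [::] => true
  | f :: q => (esrc r m f == ergn e) && chained r m f q
  end.

Definition is_path (r : nat) (m : 'I_4 -> nat) (p : seq edge) : bool :=
  match p with
  | [::] => false
  | e :: q => all (valid_edge r) p && chained r m e q
  end.

Definition path_src (r : nat) (m : 'I_4 -> nat) (p : seq edge) (d : vertex) : vertex :=
  match p with [::] => d | e :: _ => esrc r m e end.

Definition path_rng (p : seq edge) (d : vertex) : vertex :=
  match p with [::] => d | e :: q => ergn (last e q) end.

Definition path_vertices (r : nat) (m : 'I_4 -> nat) (p : seq edge) : seq vertex :=
  match p with [::] => [::] | e :: _ => esrc r m e :: map ergn p end.

(* interior vertices: all visited vertices other than the source and range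
   positions, i.e. the ranges of all edges but the last one *)
Definition interior_vertices (p : seq edge) : seq vertex :=
  match p with [::] => [::] | e :: q => map ergn (belast e q) end.

Definition forbidden (r : nat) (m : 'I_4 -> nat) (i j : 'I_4) (v : vertex) : bool :=
  (minn i j <= v.1 <= maxn i j) && (v.2 < gcdn (m v.1) r).

Definition admissible (r : nat) (m : 'I_4 -> nat) (u w : vertex) (p : seq edge) : bool :=
  [&& is_path r m p,
      path_src r m p u == u,
      path_rng p w == w &
      all (fun v => ~~ forbidden r m u.1 w.1 v) (interior_vertices p)].

Definition levels (r : nat) (m : 'I_4 -> nat) (p : seq edge) : seq 'I_4 :=
  undup (map fst (path_vertices r m p)).

Definition kstep_admissible (r : nat) (m : 'I_4 -> nat) (k : nat) (u w : vertex)
  (p : seq edge) : bool :=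
  admissible r m u w p && (size (levels r m p) == k.+1).

(* Main.v *)
Require Import Defs.
From mathcomp Require Import all_boot.
From mathcomp Require Import zify.
Set Implicit Arguments. Unset Strict Implicit. Unset Printing Implicit Defensive.

Lemma class_mod (r g x c mm : nat) : g %| r -> g %| mm ->
  (x + c * mm) %% r %% g = x %% g.
Proof.
move=> gr gm; rewrite (modn_dvdm _ gr) -modnDmr.
have /eqP -> : (c * mm) %% g == 0 by change (g %| c * mm); exact: dvdn_mull.
by rewrite addn0.
Qed.

Definition qq (r mm : nat) := r %/ gcdn mm r.

Lemma cong_step (r mm x c c' : nat) : 0 < r -> c' <= c ->
  ((x + c * mm) %% r == (x + c' * mm) %% r) = (qq r mm %| c - c').
Proof.
move=> r0 le.
have -> : x + c * mm = (x + c' * mm) + (c - c') * mm.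
  by rewrite -addnA -mulnDl subnKC.
rewrite -{2}[x + c' * mm]addn0 eqn_modDl mod0n.
change ((r %| (c - c') * mm) = (r %/ gcdn mm r %| c - c')).
set g := gcdn mm r.
have g0 : 0 < g by rewrite gcdn_gt0 r0 orbT.
have gr : g %| r := dvdn_gcdr mm r.
have gm : g %| mm := dvdn_gcdl mm r.
have Er := divnK gr; have Em := divnK gm.
rewrite -{1}Er -{1}Em mulnA dvdn_pmul2r // Gauss_dvdl //.
have : gcdn (r %/ g) (mm %/ g) * g = 1 * g.
  by rewrite muln_gcdl Er Em mul1n /g gcdnC.
by move/eqP; rewrite eqn_pmul2r // => /eqP.
Qed.


Lemma qq_gt0 r mm : 0 < r -> 0 < qq r mm.
Proof.
move=> r0; rewrite /qq divn_gt0 ?gcdn_gt0 ?r0 ?orbT //.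
by apply: dvdn_leq => //; exact: dvdn_gcdr.
Qed.


Lemma prefix_iff r mm x a : 0 < r ->
  (forall c, 0 < c <= a -> (x + c * mm) %% r != x %% r) <-> a < qq r mm.
Proof.
move=> r0; have q0 := qq_gt0 mm r0; split.
- move=> H; rewrite ltnNge; apply/negP => qa.
  have := H (qq r mm); rewrite q0 qa => /(_ isT); apply/negP/negPn.
  have := cong_step mm x r0 (leq0n (qq r mm)).
  by rewrite mul0n addn0 subn0 dvdnn => ->.
- move=> aq c /andP [c0 ca]; apply/negP.
  have := cong_step mm x r0 (leq0n c); rewrite mul0n addn0 subn0 => -> /dvdn_leq.
  by move/(_ c0); lia.
Qed.

Lemma first_iff r mm x b : 0 < r ->
  (forall c, c < b -> (x + c * mm) %% r != (x + b * mm) %% r) <-> b < qq r mm.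
Proof.
move=> r0; have q0 := qq_gt0 mm r0; split.
- move=> H; rewrite ltnNge; apply/negP => qb.
  have := H (b - qq r mm); have -> : b - qq r mm < b by lia.
  move/(_ isT); rewrite eq_sym cong_step //; last by lia.
  have -> : b - (b - qq r mm) = qq r mm by lia.
  by rewrite dvdnn.
- move=> bq c cb; rewrite eq_sym cong_step; last by lia.
  apply/negP => /dvdn_leq; have -> : 0 < b - c by lia.
  by move/(_ isT); lia.
by [].
Qed.

Lemma find_first (P : pred nat) n b : b < n -> P b ->
  (forall c, c < b -> ~~ P c) -> find P (iota 0 n) = b.
Proof.
move=> bn Pb H.
have hs : has P (iota 0 n) by apply/hasP; exists b => //; rewrite mem_iota.
have fs : find P (iota 0 n) < n by rewrite has_find size_iota in hs.
case: (ltngtP (find P (iota 0 n)) b) => // [lt|gt].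
- have := nth_find 0 hs; rewrite nth_iota // add0n => Pf.
  by have := H _ lt; rewrite Pf.
- have := before_find 0 gt; rewrite nth_iota // add0n Pb //.
Qed.

Lemma exists_unit r mm x z : 1 < r -> coprime mm r ->
  exists2 c, c < r & (x + c * mm) %% r = z %% r.
Proof.
move=> r1 co.
have mm0 : 0 < mm.
  case: mm co => // ; rewrite /coprime gcd0n => /eqP E; lia.
case: (egcdnP r mm0) => km kn E _.
rewrite (eqP co) in E.
set w := z + (r - x %% r).
exists ((km * w) %% r); first by rewrite ltn_pmod //; lia.
rewrite -modnDmr modnMml modnDmr.
have -> : km * w * mm = w * kn * r + w by rewrite mulnAC E mulnDl mul1n [kn * r * w]mulnC mulnA.
rewrite addnA [x + _]addnC -addnA modnMDl.
have -> : x + w = (x %/ r + 1) * r + z.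
  rewrite /w {1}(divn_eq x r) mulnDl mul1n.
  have := ltn_pmod x (ltnW r1); lia.
by rewrite modnMDl.
Qed.

Fixpoint loops (r : nat) (m : 'I_4 -> nat) (j : 'I_4) (x n : nat) : seq edge :=
  match n with
  | 0 => [::]
  | n'.+1 => let y := (x + m j) %% r in (j, j, y) :: loops r m j y n'
  end.

Definition PP r m (j1 j2 : 'I_4) x k a b : seq edge :=
  loops r m j1 x a ++ (j1, j2, k) :: loops r m j2 k b.

Fixpoint walk r m (v : vertex) (p : seq edge) : bool :=
  match p with
  | [::] => true
  | e :: q => (esrc r m e == v) && walk r m (ergn e) q
  end.

Lemma chained_walk r m e q : chained r m e q = walk r m (ergn e) q.
Proof. by elim: q e => //= f q IH e; rewrite IH. Qed.

Lemma walk_cat r m v s1 s2 :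
  walk r m v (s1 ++ s2) = walk r m v s1 && walk r m (last v (map ergn s1)) s2.
Proof. by elim: s1 v => //= e s1 IH v; rewrite IH andbA. Qed.

Lemma esrc_loop r m (j j' : 'I_4) y : 0 < r ->
  esrc r m (j, j', (y + m j) %% r) = (j, y %% r).
Proof.
move=> r0; rewrite /esrc /=; congr pair.
rewrite modnDml {1}(divn_eq (m j) r).
have := ltn_pmod (m j) r0.
set Q := m j %/ r; set rho := m j %% r => lt.
have -> : y + (Q * r + rho) + (r - rho) = (Q + 1) * r + y.
  rewrite mulnDl mul1n; lia.
by rewrite modnMDl.
Qed.

Lemma esrc_inv r m (f : edge) (j : 'I_4) k : 0 < r -> f.2 < r ->
  esrc r m f = (j, k) -> f.1.1 = j /\ f.2 = (k + m j) %% r.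
Proof.
move=> r0 fr; rewrite /esrc => -[<- <-]; split => //.
rewrite modnDml {2}(divn_eq (m f.1.1) r).
have := ltn_pmod (m f.1.1) r0.
set Q := m f.1.1 %/ r; set rho := m f.1.1 %% r => lt.
have -> : f.2 + (r - rho) + (Q * r + rho) = (Q + 1) * r + f.2.
  rewrite mulnDl mul1n; lia.
by rewrite modnMDl modn_small.
Qed.

Lemma loops_ranges r m j x n :
  map ergn (loops r m j x n) = [seq (j, (x + c * m j) %% r) | c <- iota 1 n].
Proof.
elim: n x => //= n IH x; rewrite IH mul1n; congr cons.
rewrite -[2]/(1 + 1) iotaDl -map_comp; apply: eq_map => c /=.
by rewrite modnDml mulnDl mul1n addnA.
Qed.

Lemma walk_loops r m j x n : 0 < r -> x < r ->
  walk r m (j, x) (loops r m j x n) /\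
  last (j, x) (map ergn (loops r m j x n)) = (j, (x + n * m j) %% r).
Proof.
move=> r0; elim: n x => [|n IH] x xr /=; first by rewrite mul0n addn0 modn_small.
rewrite esrc_loop // modn_small // eqxx /=.
have [-> ->] := IH ((x + m j) %% r) (ltn_pmod _ r0); split => //.
by rewrite modnDml mulSn addnA.
Qed.

Lemma loops_edges r m j x n e : e \in loops r m j x n -> e.1.1 = j /\ e.1.2 = j.
Proof.
elim: n x => //= n IH x; rewrite inE => /orP [/eqP -> //|]; exact: IH.
Qed.

Lemma size_loops r m j x n : size (loops r m j x n) = n.
Proof. by elim: n x => //= n IH x; rewrite IH. Qed.

Lemma is_path_walk r m p d : is_path r m p =
  (p != [::]) && all (valid_edge r) p && walk r m (path_src r m p d) p.
Proof. by case: p => //= e q; rewrite eqxx chained_walk. Qed.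

Lemma walk_src r m v p d : walk r m v p -> p != [::] -> path_src r m p d = v.
Proof. by case: p => //= e q /andP [/eqP]. Qed.

Lemma rng_last p d : p != [::] -> path_rng p d = last d (map ergn p).
Proof. by case: p => //= e q _; rewrite last_map. Qed.

Lemma belast_take (T : Type) (x : T) s : belast x s = take (size s) (x :: s).
Proof. by elim: s x => //= y s IH x; rewrite IH. Qed.

Lemma interior_take p : interior_vertices p = take (size p).-1 (map ergn p).
Proof. by case: p => //= e q; rewrite -belast_map belast_take size_map. Qed.

Lemma loops_valid r m j x n : 0 < r -> all (valid_edge r) (loops r m j x n).
Proof.
move=> r0; elim: n x => //= n IH x; rewrite IH andbT.
by rewrite /valid_edge /= leqnn ltn_pmod.
Qed.

Lemma PP_valid r m (j1 j2 : 'I_4) x k a b : 0 < r -> j1 <= j2 -> k < r ->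
  all (valid_edge r) (PP r m j1 j2 x k a b).
Proof.
move=> r0 le kr; rewrite all_cat /= !loops_valid //=.
by rewrite /valid_edge /= le kr.
Qed.

Lemma PP_nil r m j1 j2 x k a b : PP r m j1 j2 x k a b != [::].
Proof. by rewrite /PP; case: (loops _ _ _ _ _). Qed.

Lemma PP_walk r m (j1 j2 : 'I_4) x a b : 0 < r -> x < r ->
  walk r m (j1, x) (PP r m j1 j2 x ((x + a.+1 * m j1) %% r) a b).
Proof.
move=> r0 xr; rewrite /PP walk_cat.
have [-> ->] := walk_loops m j1 a r0 xr; rewrite /=.
have -> : (x + a.+1 * m j1) %% r = ((x + a * m j1) + m j1) %% r.
  by rewrite mulSn; congr (_ %% _); lia.
rewrite esrc_loop // eqxx /=.
by have [-> _] := walk_loops m j2 b r0 (ltn_pmod (x + a * m j1 + m j1) r0).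
Qed.

Lemma PP_rng r m (j1 j2 : 'I_4) x k a b d : 0 < r -> k < r ->
  path_rng (PP r m j1 j2 x k a b) d = (j2, (k + b * m j2) %% r).
Proof.
move=> r0 kr; rewrite rng_last ?PP_nil // /PP map_cat last_cat /=.
by have [_ ->] := walk_loops m j2 b r0 kr.
Qed.

Lemma PP_interior r m (j1 j2 : 'I_4) x k a b : k < r ->
  interior_vertices (PP r m j1 j2 x k a b) =
  [seq (j1, (x + c * m j1) %% r) | c <- iota 1 a] ++
  [seq (j2, (k + c * m j2) %% r) | c <- iota 0 b].
Proof.
move=> kr; rewrite interior_take /PP map_cat /= !loops_ranges size_cat /= !size_loops.
rewrite take_cat size_map size_iota.
have -> : (a + b.+1).-1 < a = false by lia.
congr cat; have -> : (a + b.+1).-1 - a = b by lia.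
have -> : (j2, k) :: [seq (j2, (k + c * m j2) %% r) | c <- iota 1 b] =
          [seq (j2, (k + c * m j2) %% r) | c <- iota 0 b.+1].
  by rewrite /= mul0n addn0 modn_small.
by rewrite -map_take take_iota; congr map; congr iota; lia.
Qed.

Lemma PP_levels r m (j1 j2 : 'I_4) x k a b : j1 != j2 ->
  size (levels r m (PP r m j1 j2 x k a b)) = 2.
Proof.
move=> ne.
have E : levels r m (PP r m j1 j2 x k a b) =i [:: j1; j2].
  move=> z; rewrite /levels mem_undup.
  have hd : path_vertices r m (PP r m j1 j2 x k a b) =
            esrc r m (head (j1, j2, k) (PP r m j1 j2 x k a b)) ::
            map ergn (PP r m j1 j2 x k a b).
    by rewrite /PP; case: (a) => //=.
  have hd1 : (esrc r m (head (j1, j2, k) (PP r m j1 j2 x k a b))).1 = j1.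
    by rewrite /PP; case: (a) => //=.
  rewrite hd map_cons inE hd1 !inE; apply/idP/idP.
  - case/orP => [->//|/mapP [v /mapP [e he ->] ->] /=].
    move: he; rewrite /PP mem_cat inE => /orP [/loops_edges [_ ->]|/orP [/eqP -> |/loops_edges [_ ->]]]; by rewrite eqxx ?orbT.
  - case/orP => [->//|/eqP ->]; apply/orP; right; apply/mapP; exists (j2, k) => //.
    apply/mapP; exists (j1, j2, k) => //; rewrite /PP mem_cat inE eqxx orbT //.
have := uniq_perm (undup_uniq _) _ E; rewrite /= inE ne => /(_ isT) /perm_size.
by rewrite /levels.
Qed.

Lemma tail_loops r m (j1 j2 : 'I_4) k q : 0 < r -> j1 < j2 ->
  all (valid_edge r) q -> walk r m (j2, k) q ->
  (forall e, e \in q -> e.1.2 \in [:: j1; j2]) ->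
  q = loops r m j2 k (size q).
Proof.
move=> r0 lt; elim: q k => //= -[[f1 f2] f3] q IH k /andP [vf vq] /andP [/eqP sf wq] He.
move: vf; rewrite /valid_edge /= => /andP [le fr].
have [E1 E3] := @esrc_inv r m (f1, f2, f3) j2 k r0 fr sf; rewrite /= in E1 E3; subst f1 f3.
have : f2 \in [:: j1; j2] by have := He _ (mem_head _ _).
rewrite !inE => /orP [/eqP E|/eqP E]; subst f2; first by move: lt le; rewrite ltnNge => /negP.
by rewrite -IH // => e he; apply: He; rewrite inE he orbT.
Qed.

Lemma decomp r m (j1 j2 : 'I_4) p x d : 0 < r -> j1 < j2 ->
  all (valid_edge r) p -> walk r m (j1, x) p ->
  (forall e, e \in p -> e.1.2 \in [:: j1; j2]) ->
  p != [::] -> (path_rng p d).1 = j2 ->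
  exists a b, p = PP r m j1 j2 x ((x + a.+1 * m j1) %% r) a b.
Proof.
move=> r0 lt; elim: p x => //= -[[e1 e2] e3] q IH x /andP [ve vq] /andP [/eqP se wq] He _ Hr.
move: ve; rewrite /valid_edge /= => /andP [le er].
have [E1 E3] := @esrc_inv r m (e1, e2, e3) j1 x r0 er se; rewrite /= in E1 E3; subst e1 e3.
have : e2 \in [:: j1; j2] by have := He _ (mem_head _ _).
rewrite !inE => /orP [/eqP E|/eqP E]; subst e2.
- case: q IH wq vq He Hr => [|f q] IH wq vq He Hr.
    by move: Hr lt => /= ->; rewrite ltnn.
  have He' : forall e, e \in f :: q -> e.1.2 \in [:: j1; j2].
    by move=> e he; apply: He; rewrite inE he orbT.
  have [a [b ->]] := IH _ vq wq He' isT Hr.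
  exists a.+1, b; rewrite /PP /=; congr (_ :: _ ++ (_, _, _) :: loops _ _ _ _ _).
  + by rewrite modnDml (mulSn a.+1) addnA.
  + by rewrite modnDml (mulSn a.+1) addnA.
- exists 0, (size q); rewrite /PP /= mul1n; congr (_ :: _).
  apply: (@tail_loops r m j1 j2) => //.
  by move=> e he; apply: He; rewrite inE he orbT.
Qed.

Lemma forb_lo r m (j1 j2 : 'I_4) z : j1 <= j2 ->
  forbidden r m j1 j2 (j1, z) = (z < gcdn (m j1) r).
Proof.
move=> le; rewrite /forbidden /=.
have -> : minn j1 j2 <= j1 <= maxn j1 j2 by apply/andP; split; lia.
by [].
Qed.

Lemma forb_hi r m (j1 j2 : 'I_4) z : j1 <= j2 ->
  forbidden r m j1 j2 (j2, z) = (z < gcdn (m j2) r).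
Proof.
move=> le; rewrite /forbidden /=.
have -> : minn j1 j2 <= j2 <= maxn j1 j2 by apply/andP; split; lia.
by [].
Qed.

Lemma two_elems (T : eqType) (s : seq T) u v z : uniq s -> size s = 2 -> u != v ->
  u \in s -> v \in s -> z \in s -> z \in [:: u; v].
Proof.
move=> us ss uv us' vs zs; rewrite !inE; apply/negPn/negP; rewrite negb_or => /andP [zu zv].
have : uniq [:: z; u; v] by rewrite /= !inE negb_or zu zv uv.
have sub : {subset [:: z; u; v] <= s}.
  by move=> w; rewrite !inE => /orP [/eqP ->|/orP [/eqP ->|/eqP ->]].
by move/uniq_leq_size => /(_ s sub); rewrite ss.
Qed.

Lemma GC r m (j1 j2 : 'I_4) x y p : 0 < r -> j1 < j2 -> x < r ->
  kstep_admissible r m 1 (j1, x) (j2, y) p <->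
  exists a b, p = PP r m j1 j2 x ((x + a.+1 * m j1) %% r) a b /\
    ((x + a.+1 * m j1) %% r + b * m j2) %% r = y /\
    (forall c, 0 < c <= a -> gcdn (m j1) r <= (x + c * m j1) %% r) /\
    (forall c, c < b -> gcdn (m j2) r <= ((x + a.+1 * m j1) %% r + c * m j2) %% r).
Proof.
move=> r0 lt xr; have le := ltnW lt; have ne : j1 != j2 by rewrite neq_ltn lt.
split.
- case/andP => /and4P [P1 P2 P3 P4] /eqP L.
  move: P1; rewrite (@is_path_walk r m _ (j1, x)) (eqP P2) => /andP [/andP [pn pv] pw].
  have Hlev : forall e, e \in p -> e.1.2 \in [:: j1; j2].
    move=> e he.
    have hs : forall z, z \in map fst (path_vertices r m p) -> z \in levels r m p.
      by move=> z; rewrite /levels mem_undup.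
    apply: (two_elems (undup_uniq _) L ne).
    + apply: hs; case: p pn P2 {he pv pw P3 P4 L} => //= e0 q _ /eqP /(f_equal fst) /= ->.
      by rewrite inE eqxx.
    + apply: hs; rewrite (rng_last _ pn) in P3.
      case: p pn P3 {he pv pw P2 P4 L} => //= e0 q _ /eqP E.
      rewrite inE; apply/orP; right.
      change (j2 \in [seq i.1 | i <- ergn e0 :: [seq ergn i | i <- q]]).
      apply/mapP; exists (j2, y) => //.
      by rewrite -E mem_last.
    + apply: hs; case: p pn he {pv pw P2 P3 P4 L} => //= e0 q _ he.
      rewrite inE; apply/orP; right.
      change (e.1.2 \in [seq i.1 | i <- ergn e0 :: [seq ergn i | i <- q]]).
      apply/mapP; exists (ergn e) => //.
      by rewrite -map_cons; apply/mapP; exists e.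
  have [a [b Ep]] := decomp r0 lt pv pw Hlev pn (f_equal fst (eqP P3)).
  have kr : (x + a.+1 * m j1) %% r < r by rewrite ltn_pmod.
  exists a, b; split => //.
  move: P3 P4; rewrite Ep PP_rng // PP_interior // all_cat => /eqP [->] /andP [A1 A2].
  split => //; split.
  + move=> c cr; have := allP A1 (j1, (x + c * m j1) %% r).
    rewrite forb_lo // -leqNgt; apply; apply/mapP; exists c => //.
    by rewrite mem_iota; lia.
  + move=> c cr; have := allP A2 (j2, ((x + a.+1 * m j1) %% r + c * m j2) %% r).
    rewrite forb_hi // -leqNgt; apply; apply/mapP; exists c => //.
    by rewrite mem_iota; lia.
- case=> a [b [-> [Hy [C1 C2]]]].
  set k := (x + a.+1 * m j1) %% r.
  have kr : k < r by rewrite ltn_pmod.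
  have W := PP_walk m j1 j2 a b r0 xr.
  have S := walk_src (j1, x) W (PP_nil r m j1 j2 x k a b).
  rewrite /kstep_admissible /admissible PP_levels // eqxx andbT.
  rewrite (@is_path_walk r m _ (j1, x)) S PP_nil PP_valid // W eqxx /=.
  rewrite PP_rng // Hy eqxx /= PP_interior // all_cat; apply/andP; split.
  + apply/allP => v /mapP [c]; rewrite mem_iota => cr ->.
    rewrite forb_lo // -leqNgt; apply: C1; lia.
  + apply/allP => v /mapP [c]; rewrite mem_iota => cr ->.
    rewrite forb_hi // -leqNgt; apply: C2; lia.
Qed.

Lemma qq1 r mm : gcdn mm r = 1 -> qq r mm = r.
Proof. by rewrite /qq => ->; rewrite divn1. Qed.

Lemma class_t r mm K t v : 0 < r -> gcdn mm r = K -> t < K ->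
  v %% r %% K = t -> K <= v %% r -> True.
Proof. by []. Qed.

Lemma cond1 r m (i l : 'I_4) K t a b : 1 < r -> gcdn (m l) r = K ->
  gcdn (m i) r = 1 -> t < K ->
  (((0 + a.+1 * m i) %% r + b * m l) %% r = t /\
   (forall c, 0 < c <= a -> gcdn (m i) r <= (0 + c * m i) %% r) /\
   (forall c, c < b -> gcdn (m l) r <= ((0 + a.+1 * m i) %% r + c * m l) %% r))
  <->
  (b < qq r (m l) /\
   a = find (fun a => ((0 + a.+1 * m i) %% r + b * m l) %% r == t) (iota 0 r)).
Proof.
move=> r1 gl gi tK; have r0 : 0 < r by lia.
have Kr : K %| r by rewrite -gl dvdn_gcdr.
have Kl : K %| m l by rewrite -gl dvdn_gcdl.
have co : coprime (m i) r by rewrite /coprime gi.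
set P := fun a => _.
split.
- case=> Hy [C1 C2]; split.
  + apply/(@first_iff r (m l) ((0 + a.+1 * m i) %% r) b r0) => c cb; rewrite Hy; have := C2 c cb; rewrite gl.
    by apply: contraTneq => ->; rewrite -ltnNge.
  + have ar : a < r.
      rewrite -(qq1 gi); apply/(@prefix_iff r (m i) 0 a r0) => c ca; rewrite mod0n.
      by have := C1 c ca; rewrite gi; case: (_ %% r).
    apply/esym/find_first => //; first by rewrite /P Hy eqxx.
    move=> c ca; apply/negP; rewrite /P -Hy.
    rewrite eqn_modDr !modn_mod eq_sym cong_step //; last by lia.
    rewrite (qq1 gi) subSS => /dvdn_leq; have -> : 0 < a - c by lia.
    by move/(_ isT); lia.
- case=> bq Ea.
  have [c cr Pc] := exists_unit (m i + b * m l) t r1 co.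
  have hP : has P (iota 0 r).
    apply/hasP; exists c; first by rewrite mem_iota; lia.
    have tr : t < r by have := dvdn_leq r0 Kr; lia.
    rewrite /P -(modn_small tr) -Pc modnDml; apply/eqP; congr (_ %% _).
    rewrite mulSn; lia.
  have ar : a < r by rewrite Ea -{2}(size_iota 0 r) -has_find.
  have Pa : P a by rewrite Ea; have := nth_find 0 hP; rewrite nth_iota ?add0n // -Ea.
  have Hy : ((0 + a.+1 * m i) %% r + b * m l) %% r = t by apply/eqP.
  split => //; split.
  + move=> c' ca; rewrite gi.
    have := (proj2 (@prefix_iff r (m i) 0 a r0)) _ c' ca.
    by rewrite (qq1 gi) mod0n => /(_ ar); case: (_ %% r).
  + move=> c' cb; rewrite gl.
    set v := ((0 + a.+1 * m i) %% r + c' * m l) %% r.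
    have vt : v != t by rewrite -Hy; exact: (proj2 (@first_iff r (m l) ((0 + a.+1 * m i) %% r) b r0)).
    have vK : v %% K = t.
      by rewrite /v (@class_mod r K _ _ (m l) Kr Kl) -(modn_small tK) -Hy (@class_mod r K _ _ (m l) Kr Kl).
    rewrite leqNgt; apply/negP => vlt; move: vt; rewrite -vK modn_small //.
    by rewrite eqxx.
Qed.

Lemma cond2 r m (i l : 'I_4) K t a b : 1 < r -> gcdn (m l) r = K ->
  gcdn (m i) r = 1 -> t < K ->
  (((t + a.+1 * m l) %% r + b * m i) %% r = 0 /\
   (forall c, 0 < c <= a -> gcdn (m l) r <= (t + c * m l) %% r) /\
   (forall c, c < b -> gcdn (m i) r <= ((t + a.+1 * m l) %% r + c * m i) %% r))
  <->
  (a < qq r (m l) /\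
   b = find (fun b => ((t + a.+1 * m l) %% r + b * m i) %% r == 0) (iota 0 r)).
Proof.
move=> r1 gl gi tK; have r0 : 0 < r by lia.
have Kr : K %| r by rewrite -gl dvdn_gcdr.
have Kl : K %| m l by rewrite -gl dvdn_gcdl.
have co : coprime (m i) r by rewrite /coprime gi.
have tr : t < r by have := dvdn_leq r0 Kr; lia.
set k := (t + a.+1 * m l) %% r.
set P := fun b => _.
split.
- case=> Hy [C1 C2]; split.
  + apply/(@prefix_iff r (m l) t a r0) => c ca; rewrite (modn_small tr).
    have := C1 c ca; rewrite gl; apply: contraTneq => ->; by rewrite -ltnNge.
  + have br : b < r.
      rewrite -(qq1 gi); apply/(@first_iff r (m i) k b r0) => c cb; rewrite Hy.
      by have := C2 c cb; rewrite gi; case: (_ %% r).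
    apply/esym/find_first => //; first by rewrite /P Hy eqxx.
    by move=> c cb; rewrite /P; have := C2 c cb; rewrite gi; case: (_ %% r).
- case=> aq Eb.
  have [c cr Pc] := exists_unit k 0 r1 co.
  have hP : has P (iota 0 r).
    by apply/hasP; exists c; [rewrite mem_iota; lia | rewrite /P Pc mod0n].
  have br : b < r by rewrite Eb -{2}(size_iota 0 r) -has_find.
  have Pb : P b by rewrite Eb; have := nth_find 0 hP; rewrite nth_iota ?add0n // -Eb.
  split; first by apply/eqP.
  split.
  + move=> c' ca; rewrite gl.
    have := (proj2 (@prefix_iff r (m l) t a r0)) aq c' ca.
    rewrite (modn_small tr) => vt.
    have vK : (t + c' * m l) %% r %% K = t.
      by rewrite (@class_mod r K _ _ (m l) Kr Kl) modn_small.
    rewrite leqNgt; apply/negP => vlt; move: vt; rewrite -{2}vK (modn_small vlt).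
    by rewrite eqxx.
  + move=> c' cb; rewrite gi.
    have := before_find 0 (leq_trans cb (eq_leq Eb)).
    rewrite nth_iota ?add0n; last by lia.
    by rewrite /P; case: (_ %% r).
Qed.

Lemma PP_find r m (j1 j2 : 'I_4) x k a b : j1 != j2 ->
  find (fun e : edge => e.1.1 != e.1.2) (PP r m j1 j2 x k a b) = a.
Proof.
move=> ne; rewrite /PP find_cat.
have -> : has (fun e : edge => e.1.1 != e.1.2) (loops r m j1 x a) = false.
  apply/hasP => -[e /loops_edges [-> ->]]; by rewrite eqxx.
by rewrite size_loops /= ne addn0.
Qed.

Lemma PP_inj r m (j1 j2 : 'I_4) x k a b x' k' a' b' : j1 != j2 ->
  PP r m j1 j2 x k a b = PP r m j1 j2 x' k' a' b' -> a = a' /\ b = b'.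
Proof.
move=> ne E.
have Ea : a = a' by rewrite -(PP_find r m x k a b ne) E PP_find.
split => //.
have := f_equal size E; rewrite /PP !size_cat /= !size_loops Ea; lia.
Qed.

Theorem lemma6p2 (r : nat) (m : 'I_4 -> nat) (l : 'I_4) (K : nat) (t : nat) :
  2 <= r ->
  gcdn (m l) r = K ->
  (forall i : 'I_4, i != l -> gcdn (m i) r = 1) ->
  t < K ->
  (forall i : 'I_4, i < l ->
     exists s : seq (seq edge),
       [/\ uniq s,
           (forall p, (p \in s) = kstep_admissible r m 1 (i, 0) (l, t) p) &
           size s = r %/ K])
  /\
  (forall i : 'I_4, l < i ->
     exists s : seq (seq edge),
       [/\ uniq s,
           (forall p, (p \in s) = kstep_admissible r m 1 (l, t) (i, 0) p) &
           size s = r %/ K]).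
Proof.
move=> r1 gl gi tK; have r0 : 0 < r by lia.
have Kr : K %| r by rewrite -gl dvdn_gcdr.
have tr : t < r by have := dvdn_leq r0 Kr; lia.
have qE : qq r (m l) = r %/ K by rewrite /qq gl.
split.
- move=> i il.
  have ne : i != l by rewrite neq_ltn il.
  have gii := gi i ne.
  pose A := fun n => find (fun a => ((0 + a.+1 * m i) %% r + n * m l) %% r == t) (iota 0 r).
  exists [seq PP r m i l 0 ((0 + (A n).+1 * m i) %% r) (A n) n | n <- iota 0 (qq r (m l))].
  split; last by rewrite size_map size_iota qE.
  + rewrite map_inj_uniq ?iota_uniq // => n n' /(PP_inj ne) [_ ->] //.
  + move=> p; apply/idP/idP.
    * case/mapP => n; rewrite mem_iota add0n => /andP [_ nq] ->.
      apply/(GC _ _ _ r0 il r0); exists (A n), n; split => //.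
      by apply/(cond1 _ _ r1 gl gii tK).
    * case/(GC _ _ _ r0 il r0) => a [b [-> /(cond1 _ _ r1 gl gii tK) [bq Ea]]].
      apply/mapP; exists b; first by rewrite mem_iota.
      by rewrite Ea.
- move=> i li.
  have ne : i != l by rewrite neq_ltn li orbT.
  have gii := gi i ne.
  have ne' : l != i by rewrite eq_sym.
  pose B := fun n => find (fun b => ((t + n.+1 * m l) %% r + b * m i) %% r == 0) (iota 0 r).
  exists [seq PP r m l i t ((t + n.+1 * m l) %% r) n (B n) | n <- iota 0 (qq r (m l))].
  split; last by rewrite size_map size_iota qE.
  + rewrite map_inj_uniq ?iota_uniq // => n n' /(PP_inj ne') [-> _] //.
  + move=> p; apply/idP/idP.
    * case/mapP => n; rewrite mem_iota add0n => /andP [_ nq] ->.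
      apply/(GC _ _ _ r0 li tr); exists n, (B n); split => //.
      by apply/(cond2 _ _ r1 gl gii tK).
    * case/(GC _ _ _ r0 li tr) => a [b [-> /(cond2 _ _ r1 gl gii tK) [aq Eb]]].
      apply/mapP; exists a; first by rewrite mem_iota.
      by rewrite Eb.
Qed.
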